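(* Let $G=(V,E)$ be an $n$-vertex graph with nonnegative interactions $J$, let $\mu$ be the associated zero-field Ising measure, and let $F\subset V$ be a subset of size $\lfloor \sqrt n/\log n\rfloor$ satisfying $\sum_{u,v\in F,u\ne v}\mathrm{Cov}_\mu(\sigma(u),\sigma(v))\le 2/\log n$. Let $(Z_t^{(+)})$ be the chain $(Z_t)$ on $\{-1,1\}^F$ started from the all-plus configuration, and $\mathcal S_t=\sum_{v\in F}Z_t^{(+)}(v)$. Then for all $t\ge0$, $$\mathbb E_+(\mathcal S_t)\ge|F|\Big(1-\frac1{|F|}\Big)^t.$$
   Context: The Ising measure is $\mu(\sigma)=Z^{-1}\exp(\sum_{uv\in E}J_{uv}\sigma(u)\sigma(v))$ on $\{\pm1\}^V$, $J_{uv}\ge0$. The chain $(Z_t)$ on $\{-1,1\}^F$: at each step a vertex $v\in F$ is chosen uniformly at random and $Z(v)$ is resampled from the conditional law of $\sigma(v)$ under $\mu$ given the spins on $F\setminus\{v\}$ (spins outside $F$ are integrated out). Its stationary law $\nu_F$ is the marginal of $\mu$ on $F$. *)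

(* Defs.v *)
From HB Require Import structures.
From mathcomp Require Import all_boot all_order all_algebra.
From mathcomp Require Import reals.
From mathcomp Require Import sequences exp.
Set Implicit Arguments. Unset Strict Implicit. Unset Printing Implicit Defensive.
Import Order.TTheory GRing.Theory Num.Theory.
Local Open Scope ring_scope.

Section Ising.
Variables (R : realType) (V : finType).

Definition spin (b : bool) : R := if b then 1 else -1.

(* Hamiltonian-weight: sum over unordered edges uv of J_uv s(u) s(v),
   written as half of the sum over ordered adjacent pairs (e symmetric). *)
Definition ising_energy (e : rel V) (J : V -> V -> R) (s : {ffun V -> bool}) : R :=
  (\sum_(u : V) \sum_(v : V | e u v) J u v * spin (s u) * spin (s v)) / 2.

Definition ising_weight e J (s : {ffun V -> bool}) : R := expR (ising_energy e J s).

Definition ising_Z e J : R := \sum_(s : {ffun V -> bool}) ising_weight e J s.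

Definition ising_mu e J (s : {ffun V -> bool}) : R := ising_weight e J s / ising_Z e J.

Definition ising_E e J (f : {ffun V -> bool} -> R) : R :=
  \sum_(s : {ffun V -> bool}) ising_mu e J s * f s.

Definition ising_cov e J (u v : V) : R :=
  ising_E e J (fun s => spin (s u) * spin (s v))
  - ising_E e J (fun s => spin (s u)) * ising_E e J (fun s => spin (s v)).

Variable F : {set V}.

Definition FV := {v : V | v \in F}.
Definition confF := {ffun FV -> bool}.

Definition restrictF (s : {ffun V -> bool}) : confF := [ffun x : FV => s (val x)].

Definition nuF e J (eta : confF) : R :=
  \sum_(s : {ffun V -> bool} | restrictF s == eta) ising_mu e J s.

Definition updF (eta : confF) (v : FV) (b : bool) : confF :=
  [ffun w => if w == v then b else eta w].

(* transition kernel of the chain (Z_t): choose v in F uniformly, resample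
   Z(v) from the conditional law of sigma(v) given the spins on F \ {v}. *)
Definition transF e J (eta eta' : confF) : R :=
  (#|F|%:R)^-1 *
  \sum_(v : FV)
     (if eta' == updF eta v (eta' v)
      then nuF e J eta' / (nuF e J (updF eta v true) + nuF e J (updF eta v false))
      else 0).

Definition plusF : confF := [ffun => true].

Fixpoint lawF e J (t : nat) (eta : confF) : R :=
  match t with
  | 0 => if eta == plusF then 1 else 0
  | t'.+1 => \sum_(xi : confF) lawF e J t' xi * transF e J xi eta
  end.

Definition magF (eta : confF) : R := \sum_(v : FV) spin (eta v).

Definition ES e J (t : nat) : R := \sum_(eta : confF) lawF e J t eta * magF eta.

End Ising.

(* Main.v *)
Require Import Defs.
From HB Require Import structures.
From mathcomp Require Import all_boot all_order all_algebra.
From mathcomp Require Import reals.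
From mathcomp Require Import sequences exp.
From mathcomp Require Import ring lra.
Import Order.TTheory GRing.Theory Num.Theory.
Local Open Scope ring_scope.
Set Implicit Arguments. Unset Strict Implicit. Unset Printing Implicit Defensive.
Section FKG.
Variables (R : realFieldType) (V : finType).

Definition joinV (s s' : {ffun V -> bool}) : {ffun V -> bool} := [ffun y => s y || s' y].
Definition meetV (s s' : {ffun V -> bool}) : {ffun V -> bool} := [ffun y => s y && s' y].
Definition agree (D : {set V}) (x s : {ffun V -> bool}) :=
  [forall u, (u \notin D) ==> (s u == x u)].
Definition updV (x : {ffun V -> bool}) u b : {ffun V -> bool} :=
  [ffun y => if y == u then b else x y].

Lemma agree0 (x s : {ffun V -> bool}) : agree set0 x s = (s == x).
Proof.
apply/forallP/eqP => [H | ->]; last by move=> y; rewrite eqxx implybT.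
apply/ffunP => y; apply/eqP; have := H y; by rewrite in_set0.
Qed.

Lemma agree_split (D : {set V}) (x : {ffun V -> bool}) (u : V) (b : bool) (s : {ffun V -> bool}) : u \in D ->
  (agree D x s && (s u == b)) = agree (D :\ u) (updV x u b) s.
Proof.
move=> uD; apply/andP/forallP.
- move=> [/forallP H /eqP Hb] y; apply/implyP.
  rewrite in_setD1 negb_and negbK; case/orP => [/eqP -> | hy].
    by rewrite ffunE eqxx Hb.
  have hyu : y != u by apply: contraNneq hy => ->.
  rewrite ffunE (negbTE hyu); exact: (implyP (H y) hy).
- move=> H; split.
    apply/forallP => y; apply/implyP => hy.
    have hyu : y != u by apply: contraNneq hy => ->.
    have := implyP (H y); rewrite in_setD1 negb_and hy orbT => /(_ isT).
    by rewrite ffunE (negbTE hyu).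
  have := implyP (H u); rewrite in_setD1 eqxx /= => /(_ isT).
  by rewrite ffunE eqxx.
Qed.

Variable w : {ffun V -> bool} -> R.
Hypothesis w_ge0 : forall s, 0 <= w s.
Hypothesis w_lsm : forall s s', w s * w s' <= w (joinV s s') * w (meetV s s').

Lemma sum_split (D : {set V}) (x : {ffun V -> bool}) (u : V) : u \in D ->
  \sum_(s | agree D x s) w s =
  \sum_(s | agree (D :\ u) (updV x u true) s) w s +
  \sum_(s | agree (D :\ u) (updV x u false) s) w s.
Proof.
move=> uD; rewrite (bigID (fun s : {ffun V -> bool} => s u)) /=; congr (_ + _); apply: eq_bigl => s.
  by rewrite -agree_split //; case: (s u); rewrite ?andbT ?andbF.
by rewrite -agree_split //; case: (s u); rewrite ?andbT ?andbF.
Qed.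

Lemma oned (a1 a0 b1 b0 c1 c0 d1 d0 : R) :
  0 <= a1 -> 0 <= a0 -> 0 <= b1 -> 0 <= b0 -> 0 <= c1 -> 0 <= c0 -> 0 <= d1 -> 0 <= d0 ->
  a1 * b1 <= c1 * d1 -> a1 * b0 <= c1 * d0 -> a0 * b1 <= c1 * d0 -> a0 * b0 <= c0 * d0 ->
  (a1 + a0) * (b1 + b0) <= (c1 + c0) * (d1 + d0).
Proof.
move=> ha1 ha0 hb1 hb0 hc1 hc0 hd1 hd0 h11 h10 h01 h00.
set s := c1 * d0; set x := a1 * b0; set y := a0 * b1.
have hs : 0 <= s by rewrite mulr_ge0.
have hx : 0 <= x by rewrite mulr_ge0.
have hy : 0 <= y by rewrite mulr_ge0.
have hxy : x * y <= s * (c0 * d1).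
  have -> : x * y = (a1 * b1) * (a0 * b0) by rewrite /x /y; ring.
  have -> : s * (c0 * d1) = (c1 * d1) * (c0 * d0) by rewrite /s; ring.
  apply: ler_pM => //; rewrite mulr_ge0 //.
have key : x + y <= s + c0 * d1.
  have [s0|spos] := eqVneq s 0.
    have : x <= 0 by rewrite -s0.
    have : y <= 0 by rewrite -s0.
    have : 0 <= c0 * d1 by rewrite mulr_ge0.
    lra.
  have sp : 0 < s by rewrite lt_def spos hs.
  have h2 : 0 <= (s - x) * (s - y) by rewrite mulr_ge0 // subr_ge0.
  have h3 : s * (x + y) <= s * (s + c0 * d1) by nra.
  by rewrite ler_pM2l in h3.
have e1 : (a1 + a0) * (b1 + b0) = a1 * b1 + x + y + a0 * b0 by rewrite /x /y; ring.
have e2 : (c1 + c0) * (d1 + d0) = c1 * d1 + s + c0 * d1 + c0 * d0 by rewrite /s; ring.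
rewrite e1 e2; lra.
Qed.

Lemma sum_ge0' (D : {set V}) (x : {ffun V -> bool}) : 0 <= \sum_(s | agree D x s) w s.
Proof. by apply: sumr_ge0 => s _. Qed.

Lemma fkg_marg n : forall (D : {set V}), #|D| = n -> forall xa xb xc xd : {ffun V -> bool},
  (forall y, y \notin D -> xc y = xa y || xb y /\ xd y = xa y && xb y) ->
  (\sum_(s | agree D xa s) w s) * (\sum_(s | agree D xb s) w s) <=
  (\sum_(s | agree D xc s) w s) * (\sum_(s | agree D xd s) w s).
Proof.
elim: n => [|n IH] D hD xa xb xc xd hb.
  have D0 : D = set0 by apply: cards0_eq.
  subst D.
  have sx x : \sum_(s | agree set0 x s) w s = w x.
    by rewrite (big_pred1 x) // => s; rewrite agree0.
  rewrite !sx.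
  have -> : xc = joinV xa xb by apply/ffunP => y; rewrite ffunE; case: (hb y _) => //; rewrite in_set0.
  have -> : xd = meetV xa xb by apply/ffunP => y; rewrite ffunE; case: (hb y _) => //; rewrite in_set0.
  exact: w_lsm.
have [u uD] : {u | u \in D}.
  case: (pickP (mem D)) => [u hu|h]; first by exists u.
  by move: hD; rewrite (eq_card0 h).
have hD' : #|D :\ u| = n by move: hD; rewrite (cardsD1 u D) uD => -[].
have ih i j : (\sum_(s | agree (D :\ u) (updV xa u i) s) w s) *
      (\sum_(s | agree (D :\ u) (updV xb u j) s) w s) <=
      (\sum_(s | agree (D :\ u) (updV xc u (i || j)) s) w s) *
      (\sum_(s | agree (D :\ u) (updV xd u (i && j)) s) w s).
  apply: IH => // y; rewrite in_setD1 negb_and negbK !ffunE.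
  case: eqP => //= _ hy; exact: hb.
rewrite (@sum_split _ xa _ uD) (@sum_split _ xb _ uD) (@sum_split _ xc _ uD) (@sum_split _ xd _ uD).
apply: oned; rewrite ?sum_ge0' //.
all: try exact: (ih true true).
all: try exact: (ih true false).
all: try exact: (ih false true).
all: try exact: (ih false false).
Qed.

End FKG.
Section Main.
Variables (R : realType) (V : finType) (e : rel V) (J : V -> V -> R) (F : {set V}).
Hypothesis J_ge0 : forall u v, 0 <= J u v.

Local Notation conf := {ffun V -> bool}.
Local Notation FVF := (FV F).
Local Notation cF := (confF F).
Local Notation mu := (ising_mu e J).
Local Notation nu := (@nuF R V F e J).

Lemma sum_constF (c : R) : \sum_(v : FVF) c = c *+ #|F|.
Proof. by rewrite sumr_const card_sig. Qed.

Lemma spin_lsm a b a' b' :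
  spin R a * spin R b + spin R a' * spin R b' <=
  spin R (a || a') * spin R (b || b') + spin R (a && a') * spin R (b && b').
Proof. by case: a; case: b; case: a'; case: b'; rewrite /spin /=; lra. Qed.

Lemma energy_lsm (s s' : conf) :
  ising_energy e J s + ising_energy e J s' <=
  ising_energy e J (joinV s s') + ising_energy e J (meetV s s').
Proof.
rewrite /ising_energy -!mulrDl; apply: ler_wpM2r; first by rewrite invr_ge0 ler0n.
rewrite -!big_split /=; apply: ler_sum => u _; rewrite -!big_split /=.
apply: ler_sum => v _; rewrite !ffunE -!mulrA -!mulrDr; apply: ler_wpM2l => //.
exact: spin_lsm.
Qed.

Lemma Z_gt0 : 0 < ising_Z e J.
Proof.
rewrite /ising_Z (bigD1 [ffun=> true]) //= /ising_weight.
apply: (lt_le_trans (expR_gt0 (ising_energy e J [ffun=> true]))); rewrite lerDl sumr_ge0 // => s _.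
exact/ltW/expR_gt0.
Qed.

Lemma mu_gt0 s : 0 < mu s.
Proof. by rewrite /ising_mu divr_gt0 ?expR_gt0 ?Z_gt0. Qed.

Lemma mu_lsm (s s' : conf) : mu s * mu s' <= mu (joinV s s') * mu (meetV s s').
Proof.
rewrite /ising_mu /ising_weight.
have E a b c : a / c * (b / c) = (a * b) * (c^-1 * c^-1) :> R by ring.
rewrite !E; apply: ler_wpM2r; first by rewrite mulr_ge0 // invr_ge0 ltW // Z_gt0.
rewrite -!expRD ler_expR; exact: energy_lsm.
Qed.

Definition ext (eta : cF) : conf :=
  [ffun y => match (insub y : option FVF) with Some z => eta z | None => false end].

Lemma restrict_ext eta : restrictF F (ext eta) = eta.
Proof. by apply/ffunP => z; rewrite !ffunE valK. Qed.

Lemma nu_agree eta : nu eta = \sum_(s | agree (~: F) (ext eta) s) mu s.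
Proof.
rewrite /nuF; apply: eq_bigl => s; apply/eqP/forallP.
- move=> <- y; apply/implyP; rewrite inE negbK => yF.
  rewrite ffunE; case: insubP => [z _ <-|]; first by rewrite ffunE.
  by rewrite yF.
- move=> H; apply/ffunP => z; rewrite ffunE.
  have := implyP (H (val z)); rewrite inE negbK (valP z) => /(_ isT)/eqP ->.
  by rewrite ffunE valK.
Qed.

Lemma nu_gt0 eta : 0 < nu eta.
Proof.
rewrite /nuF (bigD1 (ext eta)) /=; last by rewrite restrict_ext.
apply: (lt_le_trans (mu_gt0 (ext eta))); rewrite lerDl sumr_ge0 // => s _.
exact/ltW/mu_gt0.
Qed.

Definition leC (x y : cF) := forall z, x z -> y z.

Lemma nu_mono (x y : cF) v : leC x y ->
  nu (updF x v true) * nu (updF y v false) <= nu (updF y v true) * nu (updF x v false).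
Proof.
move=> hle; rewrite !nu_agree.
apply: (fkg_marg (fun s => ltW (mu_gt0 s)) mu_lsm (erefl #|~: F|)) => u.
rewrite inE negbK => uF; rewrite !ffunE; case: insubP => [z _ _|]; last by rewrite uF.
rewrite !ffunE; case: (z == v) => //=.
by have := hle z; case: (x z); case: (y z) => // ->.
Qed.
Definition pp (x : cF) (v : FVF) :=
  nu (updF x v true) / (nu (updF x v true) + nu (updF x v false)).

Lemma Zv_gt0 (x : cF) v : 0 < nu (updF x v true) + nu (updF x v false).
Proof. by rewrite addr_gt0 ?nu_gt0. Qed.

Lemma pp_ge0 x v : 0 <= pp x v.
Proof. by rewrite /pp divr_ge0 // ltW ?nu_gt0 ?Zv_gt0. Qed.

Lemma pp_le1 x v : pp x v <= 1.
Proof.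
rewrite /pp ler_pdivrMr ?Zv_gt0 // mul1r lerDl; exact/ltW/nu_gt0.
Qed.

Lemma pp_mono x y v : leC x y -> pp x v <= pp y v.
Proof.
move=> hle; have h := nu_mono v hle.
have a0 := nu_gt0 (updF x v true); have b0 := nu_gt0 (updF x v false).
have a1 := nu_gt0 (updF y v true); have b1 := nu_gt0 (updF y v false).
rewrite /pp ler_pdivrMr ?Zv_gt0 // mulrAC ler_pdivlMr ?Zv_gt0 //.
nra.
Qed.

Definition NF : R := (#|F|%:R).

Definition Pf (f : cF -> R) (x : cF) :=
  NF^-1 * \sum_(v : FVF) (pp x v * f (updF x v true) + (1 - pp x v) * f (updF x v false)).

Lemma trans_sum (f : cF -> R) x :
  \sum_(y : cF) transF e J x y * f y = Pf f x.
Proof.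
rewrite /transF /Pf.
under eq_bigr => y _ do rewrite -mulrA mulr_suml.
rewrite -mulr_sumr; congr (_ * _); rewrite exchange_big /=; apply: eq_bigr => v _.
set Z := _ + _.
have split (y : cF) : (if y == updF x v (y v) then nu y / Z else 0) * f y =
   (if y == updF x v true then nu y / Z * f y else 0) +
   (if y == updF x v false then nu y / Z * f y else 0).
  case E: (y v).
    have -> : (y == updF x v false) = false.
      by apply/eqP => h; move: E; rewrite h ffunE eqxx.
    by rewrite addr0; case: ifP => _; rewrite ?mul0r.
  have -> : (y == updF x v true) = false.
    by apply/eqP => h; move: E; rewrite h ffunE eqxx.
  by rewrite add0r; case: ifP => _; rewrite ?mul0r.
rewrite (eq_bigr _ (fun y _ => split y)) big_split /= -!big_mkcond !big_pred1_eq.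
rewrite /pp -/Z; congr (_ + _); congr (_ * _).
have := Zv_gt0 x v; rewrite -/Z => hZ.
apply/eqP; rewrite eq_sym subr_eq -mulrDl addrC divff //; exact: lt0r_neq0.
Qed.

Lemma law_step (f : cF -> R) t :
  \sum_(y : cF) lawF e J t.+1 y * f y = \sum_(x : cF) lawF e J t x * Pf f x.
Proof.
rewrite /=; under eq_bigr => y _ do rewrite mulr_suml.
rewrite exchange_big; apply: eq_bigr => x _; rewrite -trans_sum mulr_sumr.
by apply: eq_bigr => y _; rewrite mulrA.
Qed.

Lemma upd_upd (x : cF) v b b' : updF (updF x v b) v b' = updF x v b'.
Proof. by apply/ffunP => z; rewrite !ffunE; case: (z == v). Qed.

Lemma upd_id (x : cF) v : updF x v (x v) = x.
Proof. by apply/ffunP => z; rewrite !ffunE; case: eqP => // ->. Qed.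

Definition flip (v : FVF) (x : cF) := updF x v (~~ x v).

Lemma flipK v : involutive (flip v).
Proof. by move=> x; rewrite /flip upd_upd ffunE eqxx negbK upd_id. Qed.

Lemma pair_eq (x : cF) v (g : cF -> R) :
  g x + g (flip v x) = g (updF x v true) + g (updF x v false).
Proof.
rewrite /flip; have h := upd_id x v.
by case: (x v) h => h /=; rewrite h // addrC.
Qed.

Lemma stat_v (f : cF -> R) v :
  \sum_(x : cF) nu x * (pp x v * f (updF x v true) + (1 - pp x v) * f (updF x v false))
  = \sum_(x : cF) nu x * f x.
Proof.
set T := fun x => pp x v * f (updF x v true) + (1 - pp x v) * f (updF x v false).
apply/eqP; rewrite -subr_eq0 -sumrB; apply/eqP.
set D := fun x => nu x * T x - nu x * f x.
rewrite -/(\sum_(x : cF) D x).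
have hT x : T (flip v x) = T x by rewrite /T /pp /flip !upd_upd.
have hD x : D x + D (flip v x) = 0.
  rewrite /D hT.
  have -> : nu x * T x - nu x * f x + (nu (flip v x) * T x - nu (flip v x) * f (flip v x))
     = (nu x + nu (flip v x)) * T x - (nu x * f x + nu (flip v x) * f (flip v x)) by ring.
  rewrite (pair_eq x v nu) (pair_eq x v (fun z => nu z * f z)) /T /pp.
  have hZ := Zv_gt0 x v.
  field; exact: lt0r_neq0.
have e1 : \sum_(x : cF) D x = \sum_(x : cF) D (flip v x).
  exact: (reindex_inj (inv_inj (flipK v))).
have e2 : \sum_(x : cF) D x + \sum_(x : cF) D (flip v x) = 0.
  by rewrite -big_split; apply: big1 => x _; exact: hD.
lra.
Qed.

Hypothesis Fpos : (0 < #|F|)%N.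

Lemma NF_gt0 : 0 < NF.
Proof. by rewrite /NF ltr0n. Qed.

Lemma stationary (f : cF -> R) :
  \sum_(x : cF) nu x * Pf f x = \sum_(x : cF) nu x * f x.
Proof.
rewrite /Pf.
under eq_bigr => x _ do rewrite mulrCA mulr_sumr.
rewrite -mulr_sumr exchange_big /=.
under eq_bigr => v _ do rewrite stat_v.
rewrite sum_constF -mulr_natl -/NF mulrA mulVf ?mul1r //.
exact: lt0r_neq0 NF_gt0.
Qed.

Definition incr (f : cF -> R) := forall x y, leC x y -> f x <= f y.

Lemma leC_upd x y v b : leC x y -> leC (updF x v b) (updF y v b).
Proof. by move=> h z; rewrite !ffunE; case: (z == v) => //; exact: h. Qed.

Lemma leC_ft (x : cF) v : leC (updF x v false) (updF x v true).
Proof. by move=> z; rewrite !ffunE; case: (z == v). Qed.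

Lemma Pf_incr f : incr f -> incr (Pf f).
Proof.
move=> hf x y hle; rewrite /Pf; apply: ler_wpM2l; first by rewrite invr_ge0 ler0n.
apply: ler_sum => v _.
have h1 := hf _ _ (@leC_upd x y v true hle).
have h2 := hf _ _ (@leC_upd x y v false hle).
have h3 := hf _ _ (@leC_ft y v).
have hp := @pp_mono x y v hle; have p0 := pp_ge0 x v; have p1 := pp_le1 y v.
set p := pp x v in hp p0 *; set q := pp y v in hp p1 *.
set a := f (updF x v true) in h1 *; set b := f (updF x v false) in h2 *.
set a' := f (updF y v true) in h1 h3 *; set b' := f (updF y v false) in h2 h3 *.
have k1 : 0 <= p * (a' - a) by rewrite mulr_ge0 // subr_ge0.
have k2 : 0 <= (1 - p) * (b' - b) by rewrite mulr_ge0 // subr_ge0 // (le_trans hp p1).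
have k3 : 0 <= (q - p) * (a' - b') by rewrite mulr_ge0 // subr_ge0.
have -> : q * a' + (1 - q) * b' = p * a + (1 - p) * b + (p * (a' - a) + (1 - p) * (b' - b) + (q - p) * (a' - b')) by ring.
lra.
Qed.

Lemma sum_nu : \sum_(x : cF) nu x = 1.
Proof.
rewrite /nuF; under eq_bigr => x _ do rewrite big_mkcond.
rewrite exchange_big /=.
under eq_bigr => s _ do rewrite -big_mkcond (big_pred1 (restrictF F s)) //.
rewrite /ising_mu -mulr_suml; apply: divff; exact: lt0r_neq0 Z_gt0.
Qed.
Lemma leC_plus x : leC x (plusF F).
Proof. by move=> z _; rewrite ffunE. Qed.

Lemma dom t f : incr f ->
  \sum_(x : cF) nu x * f x <= \sum_(x : cF) lawF e J t x * f x.
Proof.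
elim: t f => [|t IH] f hf.
  rewrite /= [X in _ <= X](bigD1 (plusF F)) //= eqxx mul1r [X in _ <= _ + X]big1 ?addr0; last first.
    by move=> x /negbTE ->; rewrite mul0r.
  apply: (@le_trans _ _ (\sum_(x : cF) nu x * f (plusF F))).
    apply: ler_sum => x _; apply: ler_wpM2l; [exact/ltW/nu_gt0 | exact: hf _ _ (@leC_plus x)].
  by rewrite -mulr_suml sum_nu mul1r.
rewrite law_step -stationary; exact: IH (Pf_incr hf).
Qed.

Definition negC (x : cF) : cF := [ffun z => ~~ x z].
Definition negV (s : conf) : conf := [ffun z => ~~ s z].
Lemma negCK : involutive negC.
Proof. by move=> x; apply/ffunP=> z; rewrite !ffunE negbK. Qed.
Lemma negVK : involutive negV.
Proof. by move=> x; apply/ffunP=> z; rewrite !ffunE negbK. Qed.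

Lemma mu_neg s : mu (negV s) = mu s.
Proof.
rewrite /ising_mu /ising_weight; congr (expR _ / _).
rewrite /ising_energy; congr (_ / _); apply: eq_bigr => u _; apply: eq_bigr => v _.
by rewrite !ffunE /spin; case: (s u); case: (s v) => /=; ring.
Qed.

Lemma nu_neg x : nu (negC x) = nu x.
Proof.
rewrite /nuF (reindex_inj (inv_inj negVK)) /=; apply: eq_big => s.
  have -> : restrictF F (negV s) = negC (restrictF F s) by apply/ffunP => z; rewrite !ffunE.
  by rewrite (inj_eq (inv_inj negCK)).
by move=> _; rewrite mu_neg.
Qed.

Lemma mag_neg x : (@magF R V F) (negC x) = - (@magF R V F) x.
Proof.
rewrite /magF -sumrN; apply: eq_bigr => z _; rewrite ffunE /spin.
by case: (x z); rewrite /= ?opprK.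
Qed.

Lemma sum_nu_mag : \sum_(x : cF) nu x * (@magF R V F) x = 0.
Proof.
have h : \sum_(x : cF) nu x * (@magF R V F) x = \sum_(x : cF) nu (negC x) * (@magF R V F) (negC x).
  exact: (reindex_inj (inv_inj negCK)).
have h2 : \sum_(x : cF) nu (negC x) * (@magF R V F) (negC x) = - \sum_(x : cF) nu x * (@magF R V F) x.
  by rewrite -sumrN; apply: eq_bigr => x _; rewrite nu_neg mag_neg mulrN.
lra.
Qed.

Lemma magD1 (y : cF) (v : FVF) : (@magF R V F) y = spin R (y v) + \sum_(z | z != v) spin R (y z).
Proof. by rewrite /magF (bigD1 v). Qed.

Lemma mag_upd (x : cF) (v : FVF) b : (@magF R V F) (updF x v b) = (@magF R V F) x - spin R (x v) + spin R b.
Proof.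
rewrite (magD1 _ v) (magD1 x v) ffunE eqxx.
rewrite (eq_bigr (fun z => spin R (x z))); last by move=> z /negbTE hz; rewrite ffunE hz.
ring.
Qed.

Definition gF (x : cF) := \sum_(v : FVF) (2 * pp x v - 1).

Lemma gF_incr : incr gF.
Proof. move=> x y h; apply: ler_sum => v _; have := @pp_mono x y v h; lra. Qed.

Lemma Pmag x : Pf ((@magF R V F)) x = NF^-1 * ((NF - 1) * (@magF R V F) x + gF x).
Proof.
rewrite /Pf; congr (_ * _).
rewrite (eq_bigr (fun v => (@magF R V F) x + (2 * pp x v - 1) - spin R (x v))); last first.
  by move=> v _; rewrite !mag_upd /spin /=; ring.
rewrite big_split /= big_split /= sumrN sum_constF -/(gF x).
have -> : \sum_(v : FVF) spin R (x v) = (@magF R V F) x by [].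
rewrite /NF -mulr_natr; ring.
Qed.

Lemma lin (lam : cF -> R) :
  \sum_(x : cF) lam x * Pf ((@magF R V F)) x =
  NF^-1 * ((NF - 1) * \sum_(x : cF) lam x * (@magF R V F) x + \sum_(x : cF) lam x * gF x).
Proof.
rewrite mulr_sumr -big_split /= mulr_sumr; apply: eq_bigr => x _; rewrite Pmag; ring.
Qed.

Lemma sum_nu_g : \sum_(x : cF) nu x * gF x = 0.
Proof.
have h := stationary ((@magF R V F)); rewrite lin sum_nu_mag mulr0 add0r in h.
move/eqP: h; rewrite mulf_eq0 invr_eq0 (gt_eqF NF_gt0) /=; exact/eqP.
Qed.

Lemma ES_step t : ES F e J t.+1 =
  NF^-1 * ((NF - 1) * ES F e J t + \sum_(x : cF) lawF e J t x * gF x).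
Proof. by rewrite /ES law_step lin. Qed.

Lemma final t : NF * (1 - NF^-1) ^+ t <= ES F e J t.
Proof.
have hN := NF_gt0.
have hq : 0 <= 1 - NF^-1 by rewrite subr_ge0 invf_le1 // /NF ler1n.
elim: t => [|t IH].
  rewrite expr0 mulr1 /ES (bigD1 (plusF F)) //= eqxx mul1r big1 ?addr0; last first.
    by move=> x /negbTE ->; rewrite mul0r.
  rewrite /magF (eq_bigr (fun _ => 1)); last by move=> z _; rewrite ffunE.
  by rewrite sum_constF /NF lexx.
rewrite ES_step.
have hG : 0 <= \sum_(x : cF) lawF e J t x * gF x.
  by have := @dom t gF gF_incr; rewrite sum_nu_g.
have -> : NF^-1 * ((NF - 1) * ES F e J t + \sum_(x : cF) lawF e J t x * gF x) =
   (1 - NF^-1) * ES F e J t + NF^-1 * \sum_(x : cF) lawF e J t x * gF x.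
  by field; exact: lt0r_neq0.
have k1 : (1 - NF^-1) * (NF * (1 - NF^-1) ^+ t) <= (1 - NF^-1) * ES F e J t.
  exact: ler_wpM2l.
have k2 : 0 <= NF^-1 * \sum_(x : cF) lawF e J t x * gF x by rewrite mulr_ge0 // invr_ge0 ltW.
rewrite exprS mulrCA; lra.
Qed.

End Main.

Theorem lemma2p5 (R : realType) (V : finType) (e : rel V) (J : V -> V -> R)
  (F : {set V}) :
  symmetric e -> irreflexive e ->
  (forall u v, J u v = J v u) -> (forall u v, 0 <= J u v) ->
  (#|F| : int) = Num.floor (Num.sqrt (#|V|%:R : R) / ln (#|V|%:R : R)) ->
  \sum_(u in F) \sum_(v in F | u != v) ising_cov e J u v <= 2 / ln (#|V|%:R : R) ->
  forall t : nat,
    (#|F|%:R : R) * (1 - (#|F|%:R : R)^-1) ^+ t <= ES F e J t.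
Proof.
move=> _ _ _ hJ _ _ t.
case: (posnP #|F|) => [F0|Fpos].
  have hF x : (x \in F) = false by rewrite (cards0_eq F0) inE.
  rewrite F0 mul0r /ES big1 // => eta _.
  rewrite /magF big1 ?mulr0 // => z _.
  by have := valP z; rewrite hF.
exact: (@final R V e J F hJ Fpos t).
Qed.
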